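(* Assume (A1)–(A3), (B') and (C). (i) For every $n\ge3$, all $u_i,v_i\in\mathbf h$ and $\epsilon_i\in\mathbb Z_2$, $\lim_{t\to0}\frac1t\langle\Omega,(U^{(\epsilon_1)}_t-1)(u_1,v_1)\cdots(U^{(\epsilon_n)}_t-1)(u_n,v_n)\Omega\rangle=0$. (ii) For $u\in\mathbf h$, $v\in\mathcal D(G)$, product vectors $\underline p,\underline w\in\mathbf h^{\otimes n}$, $\epsilon\in\mathbb Z_2$, $\underline\epsilon'\in\mathbb Z_2^n$: $\lim_{t\to0}\frac1t\langle(U^{(\epsilon)}_t-1)(u,v)\Omega,(U^{(\underline\epsilon')}_t-1)(\underline p,\underline w)\Omega\rangle=(-1)^\epsilon\lim_{t\to0}\frac1t\langle(U_t-1)(u,v)\Omega,(U^{(\underline\epsilon')}_t-1)(\underline p,\underline w)\Omega\rangle$ (meaning: one side exists iff the other does, and they are then equal).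
   Context: All Hilbert spaces are complex and separable, with inner products antilinear in the first variable. Let $\mathbf h,\mathcal H$ be Hilbert spaces and $\Omega\in\mathcal H$ a fixed unit vector. For $A\in\mathcal B(\mathbf h\otimes\mathcal H)$ and $u,v\in\mathbf h$, the operator $A(u,v)\in\mathcal B(\mathcal H)$ is defined by $\langle\xi_1,A(u,v)\xi_2\rangle=\langle u\otimes\xi_1,A\,(v\otimes\xi_2)\rangle$ for all $\xi_1,\xi_2\in\mathcal H$; the same definition is used with $\mathbf h$ replaced by $\mathbf h^{\otimes n}$. Let $\{U_{s,t}:0\le s\le t<\infty\}$ be unitary operators on $\mathbf h\otimes\mathcal H$, $U_t:=U_{0,t}$, $U^{(0)}_{s,t}:=U_{s,t}$, $U^{(1)}_{s,t}:=U_{s,t}^*$. For $n\ge1$, $1\le k\le n$, $\epsilon\in\mathbb Z_2=\{0,1\}$, let $U^{(n,\epsilon)}_{s,t;k}$ be the operator on $\mathbf h^{\otimes n}\otimes\mathcal H$ acting as $U^{(\epsilon)}_{s,t}$ on (the $k$-th copy of $\mathbf h$)$\otimes\mathcal H$ and as the identity on the other copies of $\mathbf h$. For $\underline\epsilon\in\mathbb Z_2^n$ and $0\le s_1\le t_1\le s_2\le\dots\le s_n\le t_n$ put $U^{(\underline\epsilon)}_{\underline s,\underline t}:=U^{(n,\epsilon_1)}_{s_1,t_1;1}\cdots U^{(n,\epsilon_n)}_{s_n,t_n;n}$, so that for product vectors $\underline u=\otimes_iu_i$, $\underline v=\otimes_iv_i$ one has $U^{(\underline\epsilon)}_{\underline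 s,\underline t}(\underline u,\underline v)=\prod_{k=1}^nU^{(\epsilon_k)}_{s_k,t_k}(u_k,v_k)$ (ordered product). Write $U^{(\underline\epsilon)}_{s,t}$ when all $s_k=s$, $t_k=t$, and $U^{(n)}_t$ when moreover $s=0$, $\underline\epsilon=\underline0$. Assumptions: (A1) $U_{r,s}U_{s,t}=U_{r,t}$ for $r\le s\le t$. (A2) If $[s_1,t_1)\cap[s_2,t_2)=\emptyset$ then (i) $U_{s_1,t_1}(u_1,v_1)$ commutes with $U_{s_2,t_2}(u_2,v_2)$ and $U_{s_2,t_2}(u_2,v_2)^*$ for all $u_i,v_i\in\mathbf h$; (ii) for time tuples $\underline a,\underline b$ with $s_1\le a_1\le b_1\le\dots\le a_n\le b_n\le t_1$ and $\underline q,\underline r$ with $s_2\le q_1\le r_1\le\dots\le q_m\le r_m\le t_2$, product vectors $\underline u,\underline v\in\mathbf h^{\otimes n}$, $\underline p,\underline w\in\mathbf h^{\otimes m}$, and $\underline\epsilon\in\mathbb Z_2^n,\underline\epsilon'\in\mathbb Z_2^m$: $\langle\Omega,U^{(\underline\epsilon)}_{\underline a,\underline b}(\underline u,\underline v)U^{(\underline\epsilon')}_{\underline q,\underline r}(\underline p,\underline w)\Omega\rangle=\langle\Omega,U^{(\underline\epsilon)}_{\underline a,\underline b}(\underline u,\underline v)\Omega\rangle\langle\Omega,U^{(\underline\epsilon')}_{\underline q,\underline r}(\underline p,\underline w)\Omega\rangle$. (A3) $\langle\Omega,U^{(\underline\epsilon)}_{s,t}(\underline u,\underline v)\Omega\rangle=\langle\Omega,U^{(\underline\epsilon)}_{0,t-s}(\underline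 u,\underline v)\Omega\rangle$. (B') $\lim_{t\to0}\langle\Omega,(U_t-1)(u,v)\Omega\rangle=0$ for all $u,v\in\mathbf h$. (C) For all $u_i,v_i\in\mathbf h$, $\epsilon_i\in\mathbb Z_2$ ($i=1,2,3$): $\lim_{t\to0}\frac1t\langle\Omega,(U^{(\epsilon_1)}_t-1)(u_1,v_1)(U^{(\epsilon_2)}_t-1)(u_2,v_2)(U^{(\epsilon_3)}_t-1)(u_3,v_3)\Omega\rangle=0$. $T_t$ is the operator on $\mathbf h$ with $\langle u,T_tv\rangle=\langle\Omega,U_t(u,v)\Omega\rangle$; it is a strongly continuous contraction semigroup and $G$ denotes its generator, with domain $\mathcal D(G)$. *)

(* Defs.v *)
From mathcomp Require Import all_boot all_order all_algebra.
From mathcomp Require Import all_classical all_reals all_analysis.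
From mathcomp Require Import complex.
Import Order.TTheory GRing.Theory Num.Theory.
Import numFieldNormedType.Exports numFieldTopology.Exports.

Set Implicit Arguments.
Unset Strict Implicit.
Unset Printing Implicit Defensive.

Local Open Scope ring_scope.
Local Open Scope classical_set_scope.

Definition Cx (R : realType) := (R[i])^o.

Section Hilbert.
Variable R : realType.

Record is_hilbert (V : completeNormedModType (Cx R)) (ip : V -> V -> Cx R)
  : Prop := {
  ip_linr : forall (a : Cx R) x y z, ip x (a *: y + z) = a * ip x y + ip x z;
  ip_conj : forall x y, ip y x = (ip x y)^*;
  ip_norm : forall x, ip x x = `|x| ^+ 2;
  hilbert_separable : exists D : set V, countable D /\ closure D = setT }.

(* [tens] realizes K as the Hilbert tensor product h (x) H:
   bilinear, <u(x)x, v(x)y> = <u,v><x,y>, and elementary tensors span a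
   dense subspace (this characterizes h (x) H up to unitary equivalence). *)
Record is_tensor (h H K : completeNormedModType (Cx R))
    (iph : h -> h -> Cx R) (ipH : H -> H -> Cx R) (ipK : K -> K -> Cx R)
    (tens : h -> H -> K) : Prop := {
  tens_linl : forall (a : Cx R) u u' x,
      tens (a *: u + u') x = a *: tens u x + tens u' x;
  tens_linr : forall (a : Cx R) u x x',
      tens u (a *: x + x') = a *: tens u x + tens u x';
  tens_ip : forall u v x y, ipK (tens u x) (tens v y) = iph u v * ipH x y;
  tens_dense : closure [set z | exists n (us : 'I_n -> h) (xs : 'I_n -> H),
                          z = \sum_(k < n) tens (us k) (xs k)] = setT }.

Definition is_linop (V : completeNormedModType (Cx R)) (A : V -> V) :=
  forall (a : Cx R) x y, A (a *: x + y) = a *: A x + A y.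

Definition unitary (V : completeNormedModType (Cx R)) (ip : V -> V -> Cx R)
    (A : V -> V) :=
  [/\ is_linop A, (forall x y, ip (A x) (A y) = ip x y) &
      (forall y, exists x, A x = y)].

Definition adjoint (V : completeNormedModType (Cx R)) (ip : V -> V -> Cx R)
    (A : V -> V) : V -> V :=
  fun y => xget 0 [set z | forall x, ip z x = ip y (A x)].

Section Setting.
Variables (h H K : completeNormedModType (Cx R)).
Variables (iph : h -> h -> Cx R) (ipH : H -> H -> Cx R) (ipK : K -> K -> Cx R).
Variable tens : h -> H -> K.
Variable Omega : H.
Variable U : R -> R -> K -> K.

(* A(u,v) in B(H): <x1, A(u,v) x2> = <u (x) x1, A (v (x) x2)> *)
Definition pmat (A : K -> K) (u v : h) : H -> H :=
  fun x2 => xget 0 [set y | forall x1, ipH x1 y = ipK (tens u x1) (A (tens v x2))].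

Definition Ueps (e : bool) (s t : R) : K -> K :=
  if e then adjoint ipK (U s t) else U s t.

(* one factor U^{(eps)}_{s,t}(u,v) of an ordered product *)
Record fct := Fct { fe : bool; fs : R; ft : R; fu : h; fv : h }.

(* U^{(eps)}_{s,t}(u,v) for product vectors u = (x)_k u_k, v = (x)_k v_k :
   the ordered product of the U^{(eps_k)}_{s_k,t_k}(u_k,v_k) *)
Definition prodop (l : seq fct) : H -> H :=
  foldr (fun f acc => pmat (Ueps (fe f) (fs f) (ft f)) (fu f) (fv f) \o acc) id l.

Definition expect (l : seq fct) : Cx R := ipH Omega (prodop l Omega).

Definition times_in (s t : R) (l : seq fct) :=
  sorted <=%R (s :: rcons (flatten [seq [:: fs f; ft f] | f <- l]) t).

Definition unif (s t : R) (l : seq (bool * h * h)) : seq fct :=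
  [seq Fct f.1.1 s t f.1.2 f.2 | f <- l].

Definition disjoint_int (s1 t1 s2 t2 : R) :=
  forall r, ~ ((s1 <= r < t1) /\ (s2 <= r < t2)).

Definition A1 := forall r s t, 0 <= r -> r <= s -> s <= t ->
  forall x, U r s (U s t x) = U r t x.

Definition A2i := forall s1 t1 s2 t2, 0 <= s1 -> s1 <= t1 -> 0 <= s2 -> s2 <= t2 ->
  disjoint_int s1 t1 s2 t2 -> forall u1 v1 u2 v2 x,
  pmat (U s1 t1) u1 v1 (pmat (U s2 t2) u2 v2 x)
    = pmat (U s2 t2) u2 v2 (pmat (U s1 t1) u1 v1 x) /\
  pmat (U s1 t1) u1 v1 (adjoint ipH (pmat (U s2 t2) u2 v2) x)
    = adjoint ipH (pmat (U s2 t2) u2 v2) (pmat (U s1 t1) u1 v1 x).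

Definition A2ii := forall s1 t1 s2 t2, 0 <= s1 -> s1 <= t1 -> 0 <= s2 -> s2 <= t2 ->
  disjoint_int s1 t1 s2 t2 -> forall l1 l2 : seq fct,
  (0 < size l1)%N -> (0 < size l2)%N -> times_in s1 t1 l1 -> times_in s2 t2 l2 ->
  expect (l1 ++ l2) = expect l1 * expect l2.

Definition A3 := forall (l : seq (bool * h * h)) s t, (0 < size l)%N ->
  0 <= s -> s <= t -> expect (unif s t l) = expect (unif 0 (t - s) l).

Definition Dop (e : bool) (t : R) (u v : h) : H -> H :=
  pmat (fun x => Ueps e 0 t x - x) u v.

Definition Bp := forall u v,
  (fun t => ipH Omega (pmat (fun x => U 0 t x - x) u v Omega)) @ 0^'+ --> (0 : Cx R).

Definition dquot (l : seq (bool * h * h)) (t : R) : Cx R :=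
  ((t%:C)%C : Cx R)^-1 * ipH Omega (foldr (fun f acc => Dop f.1.1 t f.1.2 f.2 \o acc) id l Omega).

Definition Cond := forall l : seq (bool * h * h), size l = 3 ->
  dquot l @ 0^'+ --> (0 : Cx R).

Definition Tsg (t : R) (v : h) : h :=
  xget 0 [set y | forall u, iph u y = ipH Omega (pmat (U 0 t) u v Omega)].

Definition domG (v : h) : Prop :=
  cvg ((fun t => ((t%:C)%C : Cx R)^-1 *: (Tsg t v - v)) @ 0^'+).

(* t |-> (1/t) < (U^{(e)}_t-1)(u,v) Omega, (U^{(e')}_t-1)(p,w) Omega > with
   (U^{(e')}_t - 1)(p,w) = U^{(e')}_t(p,w) - <p,w> 1 for product vectors *)
Definition mixq (e : bool) (u v : h) (l : seq (bool * h * h)) (t : R) : Cx R :=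
  ((t%:C)%C : Cx R)^-1 * ipH (Dop e t u v Omega)
    (prodop (unif 0 t l) Omega - (\prod_(f <- l) iph f.1.2 f.2) *: Omega).

End Setting.
End Hilbert.

(* Main.v *)
Require Import Defs.
From mathcomp Require Import all_boot all_order all_algebra.
From mathcomp Require Import all_classical all_reals all_analysis.
From mathcomp Require Import complex.
From mathcomp Require Import ring zify.
Set Implicit Arguments. Unset Strict Implicit. Unset Printing Implicit Defensive.
Import Order.TTheory GRing.Theory Num.Theory.
Import numFieldNormedType.Exports numFieldTopology.Exports.
Local Open Scope ring_scope.
Local Open Scope classical_set_scope.
Section IP.
Variable R : realType.
Variable V : completeNormedModType (Cx R).
Variable ip : V -> V -> Cx R.
Hypothesis Hip : is_hilbert ip.

Lemma ip0r x : ip x 0 = 0.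
Proof.
have := ip_linr Hip 1 x 0 0; rewrite scale1r addr0 mul1r.
by move=> E; apply: (addIr (ip x 0)); rewrite -E add0r.
Qed.
Lemma ipDr x y z : ip x (y + z) = ip x y + ip x z.
Proof. by have := ip_linr Hip 1 x y z; rewrite scale1r mul1r. Qed.
Lemma ipZr x a y : ip x (a *: y) = a * ip x y.
Proof. by have := ip_linr Hip a x y 0; rewrite !addr0 ip0r addr0. Qed.
Lemma ipNr x y : ip x (- y) = - ip x y.
Proof. by rewrite -scaleN1r ipZr mulN1r. Qed.
Lemma ipBr x y z : ip x (y - z) = ip x y - ip x z.
Proof. by rewrite ipDr ipNr. Qed.
Lemma ip0l x : ip 0 x = 0.
Proof. by rewrite (ip_conj Hip) ip0r conjC0. Qed.
Lemma ipDl x y z : ip (y + z) x = ip y x + ip z x.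
Proof. by rewrite !(ip_conj Hip x) ipDr rmorphD. Qed.
Lemma ipZl x a y : ip (a *: y) x = a^* * ip y x.
Proof. by rewrite !(ip_conj Hip x) ipZr rmorphM. Qed.
Lemma ipNl x y : ip (- y) x = - ip y x.
Proof. by rewrite !(ip_conj Hip x) ipNr rmorphN. Qed.
Lemma ipBl x y z : ip (y - z) x = ip y x - ip z x.
Proof. by rewrite ipDl ipNl. Qed.
Lemma ipr_sum I (r : seq I) P (F : I -> V) x :
  ip x (\sum_(i <- r | P i) F i) = \sum_(i <- r | P i) ip x (F i).
Proof.
elim/big_rec2: _; first by rewrite ip0r.
by move=> i y1 y2 _ <-; rewrite ipDr.
Qed.
Lemma ipl_sum I (r : seq I) P (F : I -> V) x :
  ip (\sum_(i <- r | P i) F i) x = \sum_(i <- r | P i) ip (F i) x.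
Proof.
elim/big_rec2: _; first by rewrite ip0l.
by move=> i y1 y2 _ <-; rewrite ipDl.
Qed.
Lemma ip_self x : ip x x = `|x| ^+ 2.
Proof. exact: (ip_norm Hip). Qed.
Lemma ip_self_ge0 x : 0 <= ip x x.
Proof. by rewrite ip_self exprn_ge0. Qed.
Lemma ip_self_real x : (ip x x)^* = ip x x.
Proof. by rewrite -(ip_conj Hip). Qed.
Lemma ip_self_eq0 x : ip x x = 0 -> x = 0.
Proof. by rewrite ip_self => /eqP; rewrite expf_eq0 /= normr_eq0 => /eqP. Qed.
Lemma ip_ext x y : (forall z, ip z x = ip z y) -> x = y.
Proof.
move=> E; apply/eqP; rewrite -subr_eq0; apply/eqP/ip_self_eq0.
by rewrite ipBr E subrr.
Qed.

Lemma CS2 x y : `|ip x y| ^+ 2 <= ip x x * ip y y.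
Proof.
have [->|y0] := eqVneq y 0; first by rewrite ip0r normr0 expr0n /= ip0r mulr0.
set c := ip y y; set b := ip y x.
have cpos : 0 < c.
  rewrite lt_def ip_self_ge0 andbT; apply/eqP => /ip_self_eq0; exact/eqP.
have creal : c^* = c by exact: ip_self_real.
have Hxy : ip x y = b^* by rewrite /b -(ip_conj Hip).
have := ip_self_ge0 (c *: x - b *: y).
rewrite !ipBl !ipBr !ipZl !ipZr Hxy creal -/c -/b.
have -> : c * (c * ip x x) - c * (b * b^*) - (b^* * (c * b) - b^* * (b * c))
   = c * (c * ip x x - b * b^*) by ring.
rewrite pmulr_rge0 // subr_ge0 -normCK.
by rewrite (ip_conj Hip) -/b norm_conjC mulrC.
Qed.

Lemma CS x y : `|ip x y| <= `|x| * `|y|.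
Proof.
rewrite -(@ler_pXn2r _ 2) ?nnegrE ?mulr_ge0 ?normr_ge0 //.
by rewrite exprMn -!ip_self CS2.
Qed.
Lemma CS2n x y : `|ip x y| ^+ 2 <= `|ip x x| * `|ip y y|.
Proof. by rewrite (ger0_norm (ip_self_ge0 x)) (ger0_norm (ip_self_ge0 y)) CS2. Qed.
End IP.
Section Lip.
Variable R : realType.
Lemma lip_cvg {T} {F : set_system T} {FF : Filter F}
  (V W : normedModType (Cx R)) (g : V -> W) (f : T -> V) (a : V) (M : Cx R) :
  0 <= M -> (forall z, `|g z - g a| <= M * `|z - a|) ->
  f @ F --> a -> (g \o f) @ F --> g a.
Proof.
move=> M0 Hg /cvgrPdistC_lt fa; apply/cvgrPdistC_lt => e e0.
have M1 : 0 < M + 1 by rewrite ltr_wpDl.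
have := fa (e / (M + 1)) (divr_gt0 e0 M1).
apply: filterS => t Ht /=.
apply: (le_lt_trans (Hg _)).
apply: (le_lt_trans (y := (M + 1) * `|f t - a|)).
  by rewrite ler_wpM2r ?normr_ge0 // lerDl.
by rewrite mulrC -ltr_pdivlMr.
Qed.
Lemma ipr_cvg (V : completeNormedModType (Cx R)) (ipV : V -> V -> Cx R)
  (HV : is_hilbert ipV) {T} {F : set_system T} {FF : Filter F} x (f : T -> V) a :
  f @ F --> a -> (fun t => ipV x (f t)) @ F --> ipV x a.
Proof.
apply: (@lip_cvg T F FF V _ (ipV x) f a `|x|); first exact: normr_ge0.
by move=> z; rewrite -ipBr // CS.
Qed.
Lemma sq_squeeze {T} {F : set_system T} {FF : Filter F} (f g : T -> Cx R) :
  (\forall t \near F, `|f t| ^+ 2 <= `|g t|) -> g @ F --> 0 -> f @ F --> 0.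
Proof.
move=> Hb /cvgr0Pnorm_lt Hg; apply/cvgr0Pnorm_lt => e e0.
have := Hg (e ^+ 2) (exprn_gt0 2 e0).
apply: filter_app; apply: filterS Hb => t Hb Hgt.
rewrite -(@ltr_pXn2r _ 2) ?nnegrE ?normr_ge0 ?ltW //.
exact: le_lt_trans Hb Hgt.
Qed.
Lemma cvg_kmul0 {T} {F : set_system T} {FF : Filter F} (k : Cx R)
  (f1 f2 : T -> Cx R) : f1 @ F --> 0 -> f2 @ F --> 0 ->
  (fun t => k * f1 t * f2 t) @ F --> 0.
Proof. by move=> h1 h2; have := cvgM (cvgM (cvg_cst k) h1) h2; rewrite !mulr0; move/(_ FF FF FF). Qed.
Lemma cvgD0 {T} {F : set_system T} {FF : Filter F} (f1 f2 : T -> Cx R) :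
  f1 @ F --> 0 -> f2 @ F --> 0 -> (fun t => f1 t + f2 t) @ F --> 0.
Proof. by move=> h1 h2; have := cvgD h1 h2; rewrite addr0; move/(_ FF). Qed.
Lemma cvg_k0 {T} {F : set_system T} {FF : Filter F} (k : Cx R)
  (f1 : T -> Cx R) : f1 @ F --> 0 -> (fun t => k * f1 t) @ F --> 0.
Proof. by move=> h1; have := cvgM (cvg_cst k) h1; rewrite !mulr0; move/(_ FF FF). Qed.
Lemma cvg0_near (f g : R -> Cx R) : (forall t, 0 < t -> f t = g t) ->
  g @ 0^'+ --> 0 -> f @ 0^'+ --> 0.
Proof.
move=> E hg; apply: cvg_trans hg; apply: near_eq_cvg.
near=> t; apply/esym/E; near: t; exact: nbhs_right_gt.
Unshelve. all: by end_near.
Qed.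
End Lip.

Section Repr.
Variable R : realType.
Variables V W : completeNormedModType (Cx R).
Variables (ipV : V -> V -> Cx R) (ipW : W -> W -> Cx R).
Hypotheses (HV : is_hilbert ipV) (HW : is_hilbert ipW).

Variables (L : V -> W) (c : Cx R).
Hypothesis Lsub : forall a b, L (a - b) = L a - L b.
Hypothesis Lip : forall a b, ipW (L a) (L b) = c * ipV a b.
Variable S : set W.
Hypothesis Sd : closure S = setT.
Hypothesis Srep : forall z, S z -> exists y, forall x, ipV x y = ipW (L x) z.

Let rep z := xget 0 [set y | forall x, ipV x y = ipW (L x) z].
Let repP z : S z -> forall x, ipV x (rep z) = ipW (L x) z.
Proof. by move=> Sz; have := xgetPex 0 (Srep Sz). Qed.

Let rep_bound z1 z2 : S z1 -> S z2 ->
  `|rep z1 - rep z2| <= (`|c| + 1) * `|z1 - z2|.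
Proof.
move=> S1 S2; set d := rep z1 - rep z2; set D := z1 - z2.
have Hd x : ipV x d = ipW (L x) D by rewrite /d /D !ipBr // !repP.
have n0 := normr_ge0 d; have D0 := normr_ge0 D.
have c0 := normr_ge0 c.
have key : `|d| ^+ 4 <= `|c| * `|d| ^+ 2 * `|D| ^+ 2.
  have -> : `|d| ^+ 4 = `|ipW (L d) D| ^+ 2.
    by rewrite -Hd ip_self // normrX ger0_norm ?exprn_ge0 // -exprM.
  apply: (le_trans (CS2 HW _ _)).
  have h0 : 0 <= ipW (L d) (L d) * ipW D D by rewrite mulr_ge0 // ip_self_ge0.
  rewrite -(ger0_norm h0) Lip !ip_self // !normrM !normr_id -!expr2.
  by [].
have key2 : `|d| ^+ 2 <= `|c| * `|D| ^+ 2.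
  have [d0|dn0] := eqVneq `|d| 0.
    by rewrite d0 expr0n /= mulr_ge0 ?exprn_ge0.
  have dp : 0 < `|d| ^+ 2 by rewrite exprn_gt0 // lt_def dn0 n0.
  rewrite -(ler_pM2r dp) -exprD /=.
  by rewrite [_ * _ * _]mulrAC in key.
rewrite -(@ler_pXn2r _ 2) ?nnegrE ?mulr_ge0 ?addr_ge0 // ?ler01 //.
apply: (le_trans key2); rewrite exprMn ler_wpM2r ?exprn_ge0 //.
rewrite sqrrD1.
apply: (le_trans (y := `|c| *+ 2)); first by rewrite mulr2n lerDl.
by rewrite addrAC lerDr addr_ge0 ?exprn_ge0 ?ler01.
Qed.

Lemma repr_exists w : exists y, forall x, ipV x y = ipW (L x) w.
Proof.
have Sw : closure S w by rewrite Sd.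
pose G := within S (nbhs w).
have GP : ProperFilter G by exact: within_nbhs_proper.
have GS : G S by rewrite /G /within; apply: nearW => z.
set K := `|c| + 1.
have K0 : 0 < K by rewrite ltr_wpDl ?normr_ge0.
have cauch : cauchy (rep @ G).
  apply/cauchy_ballP => e e0.
  pose dl := e / (K *+ 2).
  have dl0 : 0 < dl by rewrite divr_gt0 // pmulrn_rgt0.
  pose A := [set y | exists z, S z /\ `|w - z| < dl /\ y = rep z].
  have GA : (rep @ G) A.
    rewrite /G /within /=; have := nbhsx_ballx w dl dl0.
    apply: filterS => z; rewrite -ball_normE /= => wz Sz.
    by exists z.
  exists (A, A) => //= -[a b] /= [[z1 [S1 [w1 ->]]] [z2 [S2 [w2 ->]]]].
  rewrite -ball_normE /=.
  apply: (le_lt_trans (rep_bound S1 S2)).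
  rewrite mulrC -ltr_pdivlMr //.
  have -> : z1 - z2 = (w - z2) - (w - z1) by rewrite opprB [RHS]addrC [RHS]addrA subrK.
  apply: (le_lt_trans (ler_normB _ _)).
  have KK : K + K != 0 by rewrite gt_eqF // addr_gt0.
  have -> : e / K = dl + dl.
    rewrite /dl mulr2n; field.
    by rewrite (gt_eqF K0) KK.
  by rewrite ltrD.
have hc : cvg (rep @ G) by exact/cauchy_cvgP.
exists (lim (rep @ G)) => x.
have h1 : (fun z => ipV x (rep z)) @ G --> ipV x (lim (rep @ G)).
  exact: (ipr_cvg HV).
have h3 : (fun z => ipW (L x) z) @ G --> ipW (L x) w.
  by apply: (ipr_cvg HW); exact: cvg_within.
have E : {near G, (fun z => ipW (L x) z) =1 (fun z => ipV x (rep z))}.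
  by apply: filterS GS => z Sz; rewrite repP.
have h2 := cvg_trans (near_eq_cvg E) h3.
exact: (cvg_unique _ h1 (h2 _)).
Qed.
End Repr.
Section Main.
Variable R : realType.
Variables (h H K : completeNormedModType (Cx R)).
Variables (iph : h -> h -> Cx R) (ipH : H -> H -> Cx R) (ipK : K -> K -> Cx R).
Variable tens : h -> H -> K.
Variable Omega : H.
Variable U : R -> R -> K -> K.
Hypotheses (Hh : is_hilbert iph) (HH : is_hilbert ipH) (HK : is_hilbert ipK).
Hypothesis Ht : is_tensor iph ipH ipK tens.
Hypothesis HO : `|Omega| = 1.
Hypothesis Hunit : forall s t, 0 <= s -> s <= t -> unitary ipK (U s t).

Lemma tens0r u : tens u 0 = 0.
Proof.
have := tens_linr Ht 1 u 0 0; rewrite !scale1r !addr0.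
by move=> E; apply: (addIr (tens u 0)); rewrite -E add0r.
Qed.
Lemma tensDr u x y : tens u (x + y) = tens u x + tens u y.
Proof. by have := tens_linr Ht 1 u x y; rewrite !scale1r. Qed.
Lemma tensBr u x y : tens u (x - y) = tens u x - tens u y.
Proof.
have := tens_linr Ht (-1) u y 0; rewrite !addr0 tens0r addr0 !scaleN1r => E.
by rewrite tensDr E.
Qed.
Lemma tens0l x : tens 0 x = 0.
Proof.
have := tens_linl Ht 1 0 0 x; rewrite !scale1r !addr0.
by move=> E; apply: (addIr (tens 0 x)); rewrite -E add0r.
Qed.
Lemma tensDl u v x : tens (u + v) x = tens u x + tens v x.
Proof. by have := tens_linl Ht 1 u v x; rewrite !scale1r. Qed.
Lemma tensBl u v x : tens (u - v) x = tens u x - tens v x.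
Proof.
have := tens_linl Ht (-1) v 0 x; rewrite !addr0 tens0l addr0 !scaleN1r => E.
by rewrite tensDl E.
Qed.

Let Sfin := [set z | exists n (us : 'I_n -> h) (xs : 'I_n -> H),
                          z = \sum_(k < n) tens (us k) (xs k)].

Lemma reprH u w : exists y, forall x1, ipH x1 y = ipK (tens u x1) w.
Proof.
apply: (@repr_exists R H K ipH ipK HH HK (tens u) (iph u u) _ Sfin).
- by move=> a b; rewrite (tens_ip Ht).
- exact: (tens_dense Ht).
- move=> z [n [us [xs ->]]].
  exists (\sum_(k < n) iph u (us k) *: xs k) => x1.
  rewrite (ipr_sum HH) (ipr_sum HK); apply: eq_bigr => k _.
  by rewrite (ipZr HH) (tens_ip Ht).
Qed.

Lemma reprh w : exists y, forall u, iph u y = ipK (tens u Omega) w.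
Proof.
apply: (@repr_exists R h K iph ipK Hh HK (fun u => tens u Omega) (ipH Omega Omega)
   _ Sfin).
- by move=> a b; rewrite (tens_ip Ht) mulrC.
- exact: (tens_dense Ht).
- move=> z [n [us [xs ->]]].
  exists (\sum_(k < n) ipH Omega (xs k) *: us k) => u.
  rewrite (ipr_sum Hh) (ipr_sum HK); apply: eq_bigr => k _.
  by rewrite (ipZr Hh) (tens_ip Ht) mulrC.
Qed.

Lemma pmatP A u v x2 x1 :
  ipH x1 (pmat ipH ipK tens A u v x2) = ipK (tens u x1) (A (tens v x2)).
Proof. have := xgetPex 0 (reprH u (A (tens v x2))); move=> /= E; exact: E. Qed.

Lemma TsgP t v u :
  iph u (Tsg iph ipH ipK tens Omega U t v) = ipK (tens u Omega) (U 0 t (tens v Omega)).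
Proof.
rewrite /Tsg.
have [y Hy] := reprh (U 0 t (tens v Omega)).
have ex : exists y, [set y | forall u, iph u y = ipH Omega (pmat ipH ipK tens (U 0 t) u v Omega)] y.
  by exists y => u' /=; rewrite pmatP Hy.
have := xgetPex 0 ex; move=> /= ->; by rewrite pmatP.
Qed.
Notation Ue := (Ueps ipK U).
Notation Dp := (Dop ipH ipK tens U).
Definition Aop e t x := Ue e 0 t x - x.

Lemma sq_inj (a b : Cx R) : 0 <= a -> 0 <= b -> a ^+ 2 = b ^+ 2 -> a = b.
Proof. by move=> a0 b0 /eqP; rewrite eqrXn2 // => /eqP. Qed.

Lemma sq_cancel (n a : Cx R) : 0 <= n -> 0 <= a -> n ^+ 2 <= n * a -> n <= a.
Proof.
move=> n0 a0; have [->|nn0] := eqVneq n 0; first by [].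
have np : 0 < n by rewrite lt_def nn0 n0.
by rewrite expr2 ler_pM2l.
Qed.

Lemma normT v x : `|tens v x| = `|v| * `|x|.
Proof.
apply: sq_inj; rewrite ?mulr_ge0 ?normr_ge0 //.
by rewrite -(ip_self HK) (tens_ip Ht) !(ip_self Hh) (ip_self HH) exprMn.
Qed.

Section T.
Variable t : R.
Hypothesis t0 : 0 <= t.

Let Hu := Hunit (lexx 0) t0.

Lemma adjP y x : ipK (adjoint ipK (U 0 t) y) x = ipK y (U 0 t x).
Proof.
case: Hu => _ iso surj; have [z Hz] := surj y.
have ex : exists z, [set z | forall x, ipK z x = ipK y (U 0 t x)] z.
  by exists z => x' /=; rewrite -Hz iso.
by have := xgetPex 0 ex; move=> /= ->.
Qed.

Lemma UUadj y : U 0 t (adjoint ipK (U 0 t) y) = y.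
Proof.
case: Hu => _ iso surj; apply: (ip_ext HK) => z.
have [w <-] := surj z.
by rewrite iso (ip_conj HK) adjP -(ip_conj HK).
Qed.

Lemma UeC e x y : ipK (Ue e 0 t x) y = ipK x (Ue (~~e) 0 t y).
Proof.
case: e; rewrite /Ueps /=; first exact: adjP.
by rewrite [RHS](ip_conj HK) adjP -(ip_conj HK).
Qed.

Lemma UeUe e x y : ipK (Ue e 0 t x) (Ue e 0 t y) = ipK x y.
Proof.
case: e; rewrite /Ueps /=; last by case: Hu.
by rewrite adjP UUadj.
Qed.

Lemma AC e x y : ipK (Aop e t x) y = ipK x (Aop (~~e) t y).
Proof. by rewrite /Aop (ipBl HK) (ipBr HK) UeC. Qed.

Lemma AA e x y :
  ipK (Aop e t x) (Aop e t y) = - ipK x (Aop (~~e) t y) - ipK x (Aop e t y).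
Proof.
by rewrite /Aop !(ipBl HK) !(ipBr HK) UeUe UeC; ring.
Qed.

Lemma DopC e u v x y : ipH (Dp e t u v x) y = ipH x (Dp (~~e) t v u y).
Proof. by rewrite (ip_conj HH) pmatP -(ip_conj HK) AC -pmatP. Qed.

Lemma DopC' e u v x y : ipH x (Dp e t u v y) = ipH (Dp (~~e) t v u x) y.
Proof. by rewrite DopC negbK. Qed.

Lemma DopD e u v x y : Dp e t u v (x + y) = Dp e t u v x + Dp e t u v y.
Proof. by apply: (ip_ext HH) => z; rewrite (ipDr HH) !DopC' (ipDr HH). Qed.
Lemma DopZ e u v a x : Dp e t u v (a *: x) = a *: Dp e t u v x.
Proof. by apply: (ip_ext HH) => z; rewrite (ipZr HH) !DopC' (ipZr HH). Qed.
Lemma Dop0 e u v : Dp e t u v 0 = 0.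
Proof. by apply: (ip_ext HH) => z; rewrite (ip0r HH) !DopC' (ip0r HH). Qed.

Lemma DopN e u v x : `|Dp e t u v x| ^+ 2 <=
  `|u| ^+ 2 * `|ipH x (Dp (~~e) t v v x) + ipH x (Dp e t v v x)|.
Proof.
set d := Dp e t u v x; set z := Aop e t (tens v x).
have E : `|d| ^+ 2 = ipK (tens u d) z by rewrite -(ip_self HH) pmatP.
have Ez : ipK z z = - (ipH x (Dp (~~e) t v v x) + ipH x (Dp e t v v x)).
  by rewrite /z AA !pmatP opprD.
have -> : `|ipH x (Dp (~~e) t v v x) + ipH x (Dp e t v v x)| = `|ipK z z|.
  by rewrite Ez normrN.
apply: sq_cancel; rewrite ?mulr_ge0 ?exprn_ge0 ?normr_ge0 //.
have -> : (`|d| ^+ 2) ^+ 2 = `|ipK (tens u d) z| ^+ 2.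
  by rewrite -E ger0_norm // exprn_ge0.
apply: (le_trans (CS2n HK _ _)).
rewrite (tens_ip Ht) (ip_self Hh) (ip_self HH) normrM !ger0_norm ?exprn_ge0 //.
  by rewrite [X in _ <= X]mulrCA mulrA.
exact: (ip_self_ge0 HK).
Qed.

Lemma UeN e w : `|Ue e 0 t w| = `|w|.
Proof. by apply: sq_inj; rewrite ?normr_ge0 // -!(ip_self HK) UeUe. Qed.

Lemma DopB e u v x : `|Dp e t u v x| <= (`|u| * `|v| *+ 2) * `|x|.
Proof.
set d := Dp e t u v x; set z := Aop e t (tens v x).
have Hz : `|z| <= `|v| *+ 2 * `|x|.
  apply: (le_trans (ler_normB _ _)); rewrite UeN normT.
  by rewrite -mulr2n mulrnAl.
have Hd : `|d| <= `|u| * `|z|.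
  apply: sq_cancel; rewrite ?mulr_ge0 ?normr_ge0 //.
  rewrite -[X in X <= _](ger0_norm (exprn_ge0 2 (normr_ge0 d))).
  rewrite -(ip_self HH) pmatP.
  by rewrite (le_trans (CS HK _ _)) // normT [X in _ <= X]mulrCA mulrA.
apply: (le_trans Hd); rewrite -mulrnAr -mulrA ler_wpM2l ?normr_ge0 //.
Qed.
End T.

Lemma pmatUe e t p w y :
  pmat ipH ipK tens (Ue e 0 t) p w y = Dp e t p w y + iph p w *: y.
Proof.
apply: (ip_ext HH) => z.
rewrite pmatP (ipDr HH) pmatP (ipZr HH) /Aop (ipBr HK) (tens_ip Ht).
by rewrite subrK.
Qed.
Definition Wd t (l : seq (bool * h * h)) : H -> H :=
  foldr (fun f acc => Dp f.1.1 t f.1.2 f.2 \o acc) id l.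
Definition adjf (f : bool * h * h) : bool * h * h := (~~ f.1.1, f.2, f.1.2).
Definition adjw (l : seq (bool * h * h)) := rev (map adjf l).

Lemma Wd_cat t a b x : Wd t (a ++ b) x = Wd t a (Wd t b x).
Proof. by elim: a => //= f a IH; rewrite IH. Qed.

Lemma adjw_cons f l : adjw (f :: l) = adjw l ++ [:: adjf f].
Proof. by rewrite /adjw /= rev_cons cats1. Qed.

Lemma size_adjw l : size (adjw l) = size l.
Proof. by rewrite /adjw size_rev size_map. Qed.

Section T2.
Variable t : R.
Hypothesis t0 : 0 <= t.

Lemma Wd_adj l x y : ipH (Wd t l x) y = ipH x (Wd t (adjw l) y).
Proof.
elim: l x y => [|f l IH] x y //=.
rewrite (DopC t0) IH adjw_cons Wd_cat /=.
by case: f => [[e u] v].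
Qed.

Lemma Wd_adj' l x y : ipH x (Wd t l y) = ipH (Wd t (adjw l) x) y.
Proof. by rewrite (ip_conj HH) Wd_adj -(ip_conj HH). Qed.

Lemma Wd_bound l x :
  `|Wd t l x| <= (\prod_(f <- l) (`|f.1.2| * `|f.2| *+ 2)) * `|x|.
Proof.
elim: l x => [|f l IH] x /=; first by rewrite big_nil mul1r.
rewrite big_cons -mulrA; apply: (le_trans (DopB t0 _ _ _ _)).
by rewrite ler_wpM2l ?mulrn_wge0 ?mulr_ge0 ?normr_ge0.
Qed.

Lemma Wd_lin l x y : Wd t l (x + y) = Wd t l x + Wd t l y.
Proof. by elim: l => //= f l IH; rewrite IH (DopD t0). Qed.
Lemma Wd_scale l a x : Wd t l (a *: x) = a *: Wd t l x.
Proof. by elim: l => //= f l IH; rewrite IH (DopZ t0). Qed.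
Lemma Wd_0 l : Wd t l 0 = 0.
Proof. by elim: l => //= f l IH; rewrite IH (Dop0 t0). Qed.
End T2.
Notation dq := (dquot ipH ipK tens Omega U).
Lemma dqE l t : dq l t = ((t%:C)%C : Cx R)^-1 * ipH Omega (Wd t l Omega).
Proof. by []. Qed.

Lemma split_last2 {T : Type} (r : seq T) : (2 <= size r)%N ->
  exists m a b, r = m ++ [:: a; b].
Proof.
case/lastP: r => [|r' b] //; case/lastP: r' => [|m a] //.
by move=> _; exists m, a, b; rewrite -!cats1 -catA.
Qed.

Lemma part_i (HC : Cond ipH ipK tens Omega U) l :
  (3 <= size l)%N -> dq l @ 0^'+ --> 0.
Proof.
move=> Hl; have [E3|n3] := eqVneq (size l) 3; first exact: HC.
case: l Hl n3 => [|f1 [|f2 r]] //= Hl n3.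
have Hr : (2 <= size r)%N by lia.
have [m [f3 [f4 ->]]] := split_last2 Hr.
case: f1 => [[e1 u1] v1]; case: f2 => [[e2 u2] v2].
case: f3 => [[e3 u3] v3]; case: f4 => [[e4 u4] v4].
set C := \prod_(f <- m) (`|f.1.2| * `|f.2| *+ 2).
have C0 : 0 <= C by rewrite prodr_ge0 // => f _; rewrite mulrn_wge0 ?mulr_ge0 ?normr_ge0.
pose a g := [:: (e1,u1,v1); (g,u2,u2); (~~e1,v1,u1)].
pose b g := [:: (~~e4,v4,u4); (g,v3,v3); (e4,u4,v4)].
pose G t := (C^+2 * `|v2|^+2 * `|u3|^+2) * (dq (a e2) t + dq (a (~~e2)) t) *
            (dq (b (~~e3)) t + dq (b e3) t).
apply: (@sq_squeeze _ _ _ _ _ G); last first.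
  by apply: cvg_kmul0; apply: cvgD0; apply: HC.
near=> t.
have t0 : 0 < t by near: t; exact: nbhs_right_gt.
have t0' : 0 <= t := ltW t0.
set tau := ((t%:C)%C : Cx R).
have tau0 : 0 < tau by rewrite ltcR.
set x1 := Dp (~~e1) t v1 u1 Omega.
set al := Dp (~~e2) t v2 u2 x1.
set x2 := Dp e4 t u4 v4 Omega.
set be := Dp e3 t u3 v3 x2.
have Eq : ipH Omega (Wd t ((e1,u1,v1) :: (e2,u2,v2) :: m ++ [:: (e3,u3,v3); (e4,u4,v4)]) Omega)
     = ipH al (Wd t m be).
  by rewrite /= Wd_cat /= (DopC' t0') (DopC' t0').
have Etau l' : tau * dq l' t = ipH Omega (Wd t l' Omega).
  by rewrite dqE mulrA mulfV ?mul1r // gt_eqF.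
have Ha : `|al| ^+ 2 <= `|v2| ^+ 2 * `|tau * (dq (a e2) t + dq (a (~~e2)) t)|.
  apply: (le_trans (DopN t0' _ _ _ _)); rewrite negbK mulrDr !Etau.
  by rewrite /x1 !(DopC t0') !negbK.
have Hb : `|be| ^+ 2 <= `|u3| ^+ 2 * `|tau * (dq (b (~~e3)) t + dq (b e3) t)|.
  apply: (le_trans (DopN t0' _ _ _ _)); rewrite mulrDr !Etau.
  by rewrite /x2 !(DopC t0').
have Hq : `|ipH al (Wd t m be)| ^+ 2 <= C ^+ 2 * (`|al| ^+ 2 * `|be| ^+ 2).
  rewrite -!exprMn ler_pXn2r ?nnegrE ?mulr_ge0 ?normr_ge0 //.
  apply: (le_trans (CS HH _ _)); rewrite mulrCA ler_wpM2l ?normr_ge0 //.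
  exact: Wd_bound.
have ninv : `|tau^-1| * `|tau| = 1 by rewrite -normrM mulVf ?normr1 // gt_eqF.
rewrite dqE Eq normrM exprMn.
apply: (le_trans (y := `|tau^-1| ^+ 2 * (C ^+ 2 * ((`|v2| ^+ 2 *
   `|tau * (dq (a e2) t + dq (a (~~e2)) t)|) * (`|u3| ^+ 2 *
   `|tau * (dq (b (~~e3)) t + dq (b e3) t)|))))).
  rewrite ler_wpM2l ?exprn_ge0 ?normr_ge0 //; apply: (le_trans Hq).
  by rewrite ler_wpM2l ?exprn_ge0 // ler_pM ?exprn_ge0 ?normr_ge0.
rewrite /G; set A := (dq (a e2) t + _); set B := (dq (b (~~e3)) t + _).
rewrite !normrM !normr_id (ger0_norm C0).
rewrite -[X in _ <= X]mul1r -(expr1n _ 2) -ninv le_eqVlt; apply/orP; left.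
apply/eqP; ring.
Unshelve. all: by end_near.
Qed.
Definition tc (t : R) : Cx R := ((t%:C)%C : Cx R).

Inductive good : (R -> H) -> Prop :=
| gW (w : seq (bool * h * h)) : w != [::] -> good (fun t => Wd t w Omega)
| gD f g : good f -> good g -> good (fun t => f t + g t)
| gZ (c : Cx R) f : good f -> good (fun t => c *: f t)
| gE f g : good f -> (forall t, 0 < t -> f t = g t) -> good g.

Section Good.
Hypothesis HC : Cond ipH ipK tens Omega U.

Lemma L1 w2 e u v f : w2 != [::] -> good f ->
  (fun t => (tc t)^-1 * ipH (f t) (Dp e t u v (Wd t w2 Omega))) @ 0^'+ --> 0.
Proof.
move=> w2n; elim.
- move=> w wn.
  apply: (@cvg0_near _ _ (dq (adjw w ++ (e, u, v) :: w2))).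
    move=> t t0; rewrite dqE (Wd_adj (ltW t0)) Wd_cat //.
  apply: (part_i HC); rewrite size_cat size_adjw /=.
  by case: w wn => // ? ?; case: w2 w2n => // ? ?; rewrite /= !addnS.
- move=> f1 f2 _ h1 _ h2.
  apply: (@cvg0_near _ _ (fun t => (tc t)^-1 * ipH (f1 t) (Dp e t u v (Wd t w2 Omega))
       + (tc t)^-1 * ipH (f2 t) (Dp e t u v (Wd t w2 Omega)))).
    by move=> t _; rewrite (ipDl HH) mulrDr.
  exact: cvgD0.
- move=> c f1 _ h1.
  apply: (@cvg0_near _ _ (fun t => c^* * ((tc t)^-1 * ipH (f1 t) (Dp e t u v (Wd t w2 Omega))))).
    by move=> t _; rewrite (ipZl HH) mulrCA.
  exact: cvg_k0.
- move=> f1 f2 _ h1 E.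
  apply: (cvg0_near _ h1) => t t0; by rewrite E.
Qed.

Lemma L2 e u v f g : good f -> good g ->
  (fun t => (tc t)^-1 * ipH (f t) (Dp e t u v (g t))) @ 0^'+ --> 0.
Proof.
move=> gf; elim.
- by move=> w wn; exact: L1.
- move=> g1 g2 _ h1 _ h2.
  apply: (@cvg0_near _ _ (fun t => (tc t)^-1 * ipH (f t) (Dp e t u v (g1 t))
       + (tc t)^-1 * ipH (f t) (Dp e t u v (g2 t)))).
    by move=> t t0; rewrite (DopD (ltW t0)) (ipDr HH) mulrDr.
  exact: cvgD0.
- move=> c g1 _ h1.
  apply: (@cvg0_near _ _ (fun t => c * ((tc t)^-1 * ipH (f t) (Dp e t u v (g1 t))))).
    by move=> t t0; rewrite (DopZ (ltW t0)) (ipZr HH) mulrCA.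
  exact: cvg_k0.
- move=> g1 g2 _ h1 E.
  apply: (cvg0_near _ h1) => t t0; by rewrite E.
Qed.
End Good.

Lemma good_Dp e u v f : good f -> good (fun t => Dp e t u v (f t)).
Proof.
elim.
- move=> w wn; exact: (gW (w := (e, u, v) :: w)).
- move=> f1 f2 _ h1 _ h2; apply: (gE (gD h1 h2)) => t t0.
  by rewrite (DopD (ltW t0)).
- move=> c f1 _ h1; apply: (gE (gZ c h1)) => t t0.
  by rewrite (DopZ (ltW t0)).
- move=> f1 f2 _ h1 E; apply: (gE h1) => t t0; by rewrite E.
Qed.

Lemma good_xi l : good (fun t => prodop ipH ipK tens U (unif 0 t l) Omega
   - (\prod_(f <- l) iph f.1.2 f.2) *: Omega).
Proof.
elim: l => [|f l IH].
  apply: (gE (gZ 0 (gW (w := [:: (false, 0, 0)]) _))) => // t _.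
  by rewrite big_nil scale1r subrr scale0r.
case: f => [[e p] w] /=.
set c := \prod_(f <- l) iph f.1.2 f.2.
set xi := fun t => prodop ipH ipK tens U (unif 0 t l) Omega - c *: Omega.
have gx : good xi := IH.
apply: (gE (gD (gD (good_Dp e p w gx) (gZ c (gW (w := [:: (e, p, w)]) _))) (gZ (iph p w) gx))) => // t t0.
rewrite big_cons pmatUe /xi /=.
set P := prodop _ _ _ _ _ _.
have DB : Dp e t p w (P - c *: Omega) = Dp e t p w P - c *: Dp e t p w Omega.
  by rewrite (DopD (ltW t0)) -scaleNr (DopZ (ltW t0)) scaleNr.
rewrite DB scalerBr scalerA subrK addrA.
by [].
Qed.
Notation mq := (mixq iph ipH ipK tens Omega U).
Notation Ts := (Tsg iph ipH ipK tens Omega U).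

Lemma OmOm : ipH Omega Omega = 1.
Proof. by rewrite (ip_self HH) HO expr1n. Qed.

Lemma DopT t v : ipH Omega (Dp false t v v Omega) = iph v (Ts t v - v).
Proof.
rewrite pmatP /Aop /Ueps /= (ipBr HK) (ipBr Hh) TsgP (tens_ip Ht) OmOm mulr1.
by [].
Qed.

Lemma part_ii_sum (HC : Cond ipH ipK tens Omega U) u v
  (hv : domG iph ipH ipK tens Omega U v) l :
  (fun t => mq true u v l t + mq false u v l t) @ 0^'+ --> 0.
Proof.
set c := \prod_(f <- l) iph f.1.2 f.2.
set xi := fun t => prodop ipH ipK tens U (unif 0 t l) Omega - c *: Omega.
have gx : good xi := good_xi l.
move: hv; rewrite /domG.
set F := (fun t => _); move=> hv.
set M := `|lim (F @ 0^'+)| + 1.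
have M0 : 0 <= M by rewrite addr_ge0 ?normr_ge0.
pose g t := ipH (xi t) (Dp true t u u (xi t)) + ipH (xi t) (Dp false t u u (xi t)).
pose G t := (`|v| *+ 2 * M) * ((tc t)^-1 * g t).
apply: (@sq_squeeze _ _ _ _ _ G); last first.
  apply: cvg_k0.
  apply: (cvg0_near _ (cvgD0 (L2 HC true u u gx gx) (L2 HC false u u gx gx))).
  by move=> t _; rewrite mulrDr.
have hF := (cvgrPdist_lt _ _).1 hv 1 ltr01.
near=> t.
have t0 : 0 < t by near: t; exact: nbhs_right_gt.
have t0' : 0 <= t := ltW t0.
have tau0 : 0 < tc t by rewrite ltcR.
have tnz : tc t != 0 by rewrite gt_eqF.
have hT : `|Ts t v - v| <= tc t * M.
  have hFt : `|lim (F @ 0^'+) - F t| < 1 by near: t; exact: hF.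
  have : `|F t| <= M.
    have -> : F t = lim (F @ 0^'+) - (lim (F @ 0^'+) - F t) by rewrite subKr.
    apply: (le_trans (ler_normB _ _)); rewrite lerD2l ltW //.
  rewrite /F normrZ ger0_norm; last by rewrite invr_ge0 ltW.
  move=> hle.
  have -> : `|Ts t v - v| = tc t * ((tc t)^-1 * `|Ts t v - v|).
    by rewrite mulrA mulfV ?mul1r.
  by apply: ler_wpM2l; [exact: ltW | exact: hle].
set z := tens v Omega; set z' := tens u (xi t).
have EX : mq true u v l t + mq false u v l t = (tc t)^-1 *
   (ipK z' (Aop true t z) + ipK z' (Aop false t z))^*.
  by rewrite rmorphD /mixq -mulrDr !(ip_conj HH (xi t)) !pmatP.
have Ea : `|ipK z' (Aop true t z) + ipK z' (Aop false t z)| =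
          `|ipK (Aop false t z') (Aop false t z)|.
  by rewrite (AA t0') /= -opprD normrN.
have Ezz' : `|ipK (Aop false t z') (Aop false t z')| = `|g t|.
  by rewrite (AA t0') /g /= !pmatP -opprD normrN.
have hy : `|iph v (Ts t v - v)| <= `|v| * (tc t * M).
  apply: (le_trans (CS Hh _ _)); apply: ler_wpM2l => //; exact: normr_ge0.
have Ezz : `|ipK (Aop false t z) (Aop false t z)| <= (`|v| *+ 2 * M) * tc t.
  have e1 : ipK z (Aop true t z) = (iph v (Ts t v - v))^*.
    by rewrite /z -pmatP (DopC' t0') (ip_conj HH) DopT.
  have e2 : ipK z (Aop false t z) = iph v (Ts t v - v) by rewrite /z -pmatP DopT.
  rewrite (AA t0') /= e1 e2; apply: (le_trans (ler_normB _ _)).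
  rewrite normrN norm_conjC.
  have -> : (`|v| *+ 2 * M) * tc t = `|v| * (tc t * M) + `|v| * (tc t * M).
    by rewrite mulr2n; ring.
  exact: lerD.
have K0 : 0 <= `|v| *+ 2 * M by rewrite mulr_ge0 ?mulrn_wge0 ?normr_ge0.
have ninv : `|(tc t)^-1| * tc t = 1.
  by rewrite ger0_norm ?mulVf // invr_ge0 ltW.
rewrite EX normrM norm_conjC Ea exprMn.
apply: (le_trans (y := `|(tc t)^-1| ^+ 2 * (`|g t| * ((`|v| *+ 2 * M) * tc t)))).
  apply: ler_wpM2l; first exact: exprn_ge0 (normr_ge0 _).
  apply: (le_trans (CS2n HK _ _)); rewrite Ezz'.
  by apply: ler_wpM2l => //; exact: normr_ge0.
rewrite /G normrM (ger0_norm K0) normrM.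
rewrite -[X in _ <= X]mul1r -ninv le_eqVlt; apply/orP; left.
apply/eqP; ring.
Unshelve. all: by end_near.
Qed.
End Main.
Unset Implicit Arguments.

Theorem lemma3p4 (R : realType) (h H K : completeNormedModType (Cx R))
  (iph : h -> h -> Cx R) (ipH : H -> H -> Cx R) (ipK : K -> K -> Cx R)
  (tens : h -> H -> K) (Omega : H) (U : R -> R -> K -> K) :
  is_hilbert iph -> is_hilbert ipH -> is_hilbert ipK ->
  is_tensor iph ipH ipK tens ->
  `|Omega| = 1 ->
  (forall s t, 0 <= s -> s <= t -> unitary ipK (U s t)) ->
  A1 U ->
  A2i ipH ipK tens U ->
  A2ii ipH ipK tens Omega U ->
  A3 ipH ipK tens Omega U ->
  Bp ipH ipK tens Omega U ->
  Cond ipH ipK tens Omega U ->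
  (* (i) *)
  (forall l : seq (bool * h * h), (3 <= size l)%N ->
     dquot ipH ipK tens Omega U l @ 0^'+ --> (0 : Cx R)) /\
  (* (ii) *)
  (forall (u v : h), domG iph ipH ipK tens Omega U v ->
   forall (e : bool) (l : seq (bool * h * h)), (0 < size l)%N ->
     (cvg (mixq iph ipH ipK tens Omega U e u v l @ 0^'+) <->
      cvg (mixq iph ipH ipK tens Omega U false u v l @ 0^'+)) /\
     (cvg (mixq iph ipH ipK tens Omega U false u v l @ 0^'+) ->
      lim (mixq iph ipH ipK tens Omega U e u v l @ 0^'+) =
      (-1) ^+ e * lim (mixq iph ipH ipK tens Omega U false u v l @ 0^'+))).
Proof.
move=> Hh HH HK Ht HO Hunit _ _ _ _ _ HC.
split.
  by move=> l Hl; apply: (part_i Hh HH HK Ht Hunit HC Hl).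
move=> u v hv e l _.
have S := part_ii_sum Hh HH HK Ht HO Hunit HC u hv l.
case: e; last by split => // _; rewrite expr0 mul1r.
set F1 := mixq iph ipH ipK tens Omega U true u v l.
set F0 := mixq iph ipH ipK tens Omega U false u v l.
have E0 : F0 = (fun t => F1 t + F0 t) - F1.
  by apply: funext => t /=; rewrite addrC addKr.
have E1 : F1 = (fun t => F1 t + F0 t) - F0.
  by apply: funext => t /=; rewrite addrK.
split; first split.
- move=> hc; apply: (cvgP (0 - lim (F1 @ 0^'+))); rewrite E0.
  exact: cvgB S hc.
- move=> hc; apply: (cvgP (0 - lim (F0 @ 0^'+))); rewrite E1.
  exact: cvgB S hc.
- move=> hc; have h1 : F1 @ 0^'+ --> 0 - lim (F0 @ 0^'+).
    by rewrite E1; exact: cvgB S hc.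
  by rewrite (cvg_lim _ h1) // expr1 mulN1r sub0r.
Qed.
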